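(* Let $Q\in\mathbb{C}^\times$ and let $\alpha_0,\alpha_1,\alpha_2$ be nonzero complex parameters with $\alpha_0\alpha_1\alpha_2=Q$; indices of $\alpha_i,\tau_i,\overline{\tau}_i,T_i$ are read modulo $3$ (so index $3$ means index $0$). Let $\tau_i,\overline{\tau}_i$ ($i\in\mathbb{Z}/3\mathbb{Z}$) be functions of the parameters, and let the translations $T_1,T_2,T_3$ act on the parameters by $T_1:(\alpha_0,\alpha_1,\alpha_2)\mapsto(Q\alpha_0,Q^{-1}\alpha_1,\alpha_2)$, $T_2:(\alpha_0,\alpha_1,\alpha_2)\mapsto(\alpha_0,Q\alpha_1,Q^{-1}\alpha_2)$, $T_3:(\alpha_0,\alpha_1,\alpha_2)\mapsto(Q^{-1}\alpha_0,\alpha_1,Q\alpha_2)$, and on functions $F$ of the parameters by $T_j(F)(\alpha)=F(T_j(\alpha))$. Suppose that for each $i=1,2,3$ the following identities hold: \[T_i(\tau_{i-1})=\tau_i,\qquad T_i(\overline{\tau}_{i-1})=\overline{\tau}_i,\] \[T_i(\tau_{i+1})=\frac{\alpha_{i-1}^6\tau_i\overline{\tau}_{i+1}+Q^2\overline{\tau}_i\tau_{i+1}}{Q\alpha_{i-1}^3\overline{\tau}_{i-1}},\qquad T_i(\overline{\tau}_{i+1})=\frac{Q^2\alpha_{i-1}^6\tau_{i+1}\overline{\tau}_i+\overline{\tau}_{i+1}\tau_i}{Q\alpha_{i-1}^3\tau_{i-1}}.\] Then for each $i=1,2,3$ the following identities also hold: \[T_i(\tau_i)=\frac{1}{\alpha_{i+1}^3\alpha_{i-1}^6}\frac{\tau_i^2}{\tau_{i-1}}+\frac{\alpha_{i+1}\alpha_{i-1}^4}{\alpha_i^2}\frac{\tau_i\overline{\tau}_i}{\overline{\tau}_{i-1}}+\frac{\alpha_i^2\alpha_{i-1}^2}{\alpha_{i+1}}\frac{\overline{\tau}_i\tau_i\tau_{i+1}}{\overline{\tau}_{i+1}\tau_{i-1}}+\alpha_{i+1}^3\frac{\overline{\tau}_i^2\tau_{i+1}}{\overline{\tau}_{i+1}\overline{\tau}_{i-1}},\]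 \[T_i(\overline{\tau}_i)=\frac{1}{\alpha_{i+1}^3\alpha_{i-1}^6}\frac{\overline{\tau}_i^2}{\overline{\tau}_{i-1}}+\alpha_i^2\alpha_{i+1}^5\alpha_{i-1}^8\frac{\tau_i\overline{\tau}_i}{\tau_{i-1}}+\frac{1}{\alpha_i^2\alpha_{i+1}^5\alpha_{i-1}^2}\frac{\tau_i\overline{\tau}_i\overline{\tau}_{i+1}}{\tau_{i+1}\overline{\tau}_{i-1}}+\alpha_{i+1}^3\frac{\tau_i^2\overline{\tau}_{i+1}}{\tau_{i+1}\tau_{i-1}}.\]
   Context: This arises in the $\tau$-function formulation of the $q$-Painlevé III equation with affine Weyl group symmetry of type $(A_2+A_1)^{(1)}$: $q=Q^6$, $a_i=\alpha_i^6$ with $a_0a_1a_2=q$, and the translations are $T_1=\pi s_2s_1$, $T_2=s_1\pi s_2$, $T_3=s_2s_1\pi$, which commute and satisfy $T_1T_2T_3=1$. The identities are understood as identities of functions of the parameters (coefficients are evaluated at the unshifted parameters). *)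

(* Defs.v *)
From HB Require Import structures.
From mathcomp Require Import all_boot all_order all_algebra.
Set Implicit Arguments. Unset Strict Implicit. Unset Printing Implicit Defensive.
Import Order.TTheory GRing.Theory Num.Theory.
Local Open Scope ring_scope.

Definition par (K : Type) := (K * K * K)%type.

Definition md3 (n : nat) : 'I_3 := Ordinal (ltn_pmod n (isT : (0 < 3)%N)).

Definition alp (K : Type) (p : par K) (n : nat) : K :=
  match (n %% 3)%N with
  | 0%N => p.1.1
  | 1%N => p.1.2
  | _ => p.2
  end.

Definition admissible (K : fieldType) (Q : K) (p : par K) : Prop :=
  [/\ p.1.1 != 0, p.1.2 != 0, p.2 != 0 & p.1.1 * p.1.2 * p.2 = Q].

Definition Tpar (K : fieldType) (Q : K) (j : nat) (p : par K) : par K :=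
  match (j %% 3)%N with
  | 1%N => (Q * p.1.1, Q^-1 * p.1.2, p.2)
  | 2%N => (p.1.1, Q * p.1.2, Q^-1 * p.2)
  | _ => (Q^-1 * p.1.1, p.1.2, Q * p.2)
  end.

Definition Tact (K : fieldType) (Q : K) (j : nat) (F : par K -> K) : par K -> K :=
  fun p => F (Tpar Q j p).

(* Main.v *)
Require Import Defs.
From HB Require Import structures.
From mathcomp Require Import all_boot all_order all_algebra.
From mathcomp Require Import ring.
Import Order.TTheory GRing.Theory Num.Theory.
Local Open Scope ring_scope.

Lemma md3_3 : md3 3 = md3 0. Proof. exact: val_inj. Qed.
Lemma md3_4 : md3 4 = md3 1. Proof. exact: val_inj. Qed.

Lemma admT (K : fieldType) (Q : K) j q : Q != 0 -> admissible Q q -> admissible Q (Tpar Q j q).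
Proof.
move=> HQ; case: q => [[x0 x1] x2] [/= h0 h1 h2 hQ].
rewrite /Tpar; case: (j %% 3)%N => [|[|[|n]]] /=; split;
  rewrite ?mulf_neq0 ?invr_eq0 //= -hQ; field; by rewrite h0 h1 h2.
Qed.

Lemma Tcomp (K : fieldType) (Q : K) a b c q : Q != 0 ->
  [/\ (a %% 3 = 1)%N, (b %% 3 = 2)%N & (c %% 3 = 0)%N] \/
  [/\ (a %% 3 = 2)%N, (b %% 3 = 0)%N & (c %% 3 = 1)%N] \/
  [/\ (a %% 3 = 0)%N, (b %% 3 = 1)%N & (c %% 3 = 2)%N] ->
  Tpar Q c (Tpar Q b (Tpar Q a q)) = q.
Proof.
move=> HQ; case: q => [[x0 x1] x2].
by rewrite /Tpar => -[[->->->]|[[->->->]|[->->->]]] /=; rewrite ?mulKf ?mulVKf.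
Qed.
Theorem lemma3p2 (K : numClosedFieldType) (Q : K)
    (tau taub : 'I_3 -> par K -> K) :
  Q != 0 ->
  (forall p, admissible Q p -> forall k, tau k p != 0 /\ taub k p != 0) ->
  (forall p, admissible Q p -> forall i : nat, (1 <= i <= 3)%N ->
     let a n := alp p n in
     let t n := tau (md3 n) p in
     let tb n := taub (md3 n) p in
     [/\ Tact Q i (tau (md3 i.-1)) p = t i,
         Tact Q i (taub (md3 i.-1)) p = tb i,
         Tact Q i (tau (md3 i.+1)) p =
           (a i.-1 ^+ 6 * t i * tb i.+1 + Q ^+ 2 * tb i * t i.+1)
             / (Q * a i.-1 ^+ 3 * tb i.-1)
       & Tact Q i (taub (md3 i.+1)) p =
           (Q ^+ 2 * a i.-1 ^+ 6 * t i.+1 * tb i + tb i.+1 * t i)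
             / (Q * a i.-1 ^+ 3 * t i.-1)]) ->
  forall p, admissible Q p -> forall i : nat, (1 <= i <= 3)%N ->
     let a n := alp p n in
     let t n := tau (md3 n) p in
     let tb n := taub (md3 n) p in
     Tact Q i (tau (md3 i)) p =
       1 / (a i.+1 ^+ 3 * a i.-1 ^+ 6) * (t i ^+ 2 / t i.-1)
       + a i.+1 * a i.-1 ^+ 4 / a i ^+ 2 * (t i * tb i / tb i.-1)
       + a i ^+ 2 * a i.-1 ^+ 2 / a i.+1 * (tb i * t i * t i.+1 / (tb i.+1 * t i.-1))
       + a i.+1 ^+ 3 * (tb i ^+ 2 * t i.+1 / (tb i.+1 * tb i.-1))
  /\ Tact Q i (taub (md3 i)) p =
       1 / (a i.+1 ^+ 3 * a i.-1 ^+ 6) * (tb i ^+ 2 / tb i.-1)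
       + a i ^+ 2 * a i.+1 ^+ 5 * a i.-1 ^+ 8 * (t i * tb i / t i.-1)
       + 1 / (a i ^+ 2 * a i.+1 ^+ 5 * a i.-1 ^+ 2)
           * (t i * tb i * tb i.+1 / (t i.+1 * tb i.-1))
       + a i.+1 ^+ 3 * (t i ^+ 2 * tb i.+1 / (t i.+1 * t i.-1)).
Proof.
move=> HQ Hnz H p Hp i /andP[i1 i3].
case: i i1 i3 => [|[|[|[|i]]]] //= _ _.
- case: p Hp => [[x0 x1] x2] Hp; set p := (x0,x1,x2) in Hp *.
  pose r := Tpar Q 1 p; pose m := Tpar Q 2 r.
  have Hr : admissible Q r by exact: admT.
  have Hm : admissible Q m by exact: admT.
  have Em : Tpar Q 3 m = p by apply: Tcomp => //; left.
  move: (H p Hp 1 isT) => /= [A1 A2 A3 A4].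
  move: (H r Hr 2 isT) => /= [_ _ B3 B4].
  move: (H m Hm 3 isT) => /= [C1 C2 _ _].
  rewrite /Tact -/r -/m Em ?md3_3 ?md3_4 in A1 A2 A3 A4 B3 B4 C1 C2 *.
  rewrite -?[md3 0]/(md3 0) -?[md3 1]/(md3 1) -?[md3 2]/(md3 2) -?[alp r 1]/(Q^-1 * x1) in A1 A2 A3 A4 B3 B4 C1 C2 *.
  have [nx0 nx1 nx2 EQ] : [/\ x0 != 0, x1 != 0, x2 != 0 & x0 * x1 * x2 = Q] := Hp.
  have [nt0 ntb0] := Hnz _ Hp (md3 0).
  have [nt1 ntb1] := Hnz _ Hp (md3 1).
  have [nt2 ntb2] := Hnz _ Hp (md3 2).
  have [nX nXb] := Hnz _ Hr (md3 1).
  rewrite -?[alp _ 0]/x0 -?[alp _ 1]/x1 -?[alp _ 2]/x2 -?[alp _ 3]/x0 -?[alp _ 4]/x1 in A3 A4 *.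
  have e1 : taub (md3 2) p * (Q * (Q^-1 * x1) ^+ 3) * tau (md3 1) r =
    Q ^+ 2 * (Q^-1 * x1) ^+ 6 * tau (md3 0) r * taub (md3 2) r +
     taub (md3 0) r * tau (md3 2) r.
    rewrite C2 B4 -mulrA divfK // !mulf_neq0 // ?expf_neq0 ?mulf_neq0 ?invr_eq0 //.
  have e2 : tau (md3 2) p * (Q * (Q^-1 * x1) ^+ 3) * taub (md3 1) r =
    (Q^-1 * x1) ^+ 6 * tau (md3 2) r * taub (md3 0) r +
     Q ^+ 2 * taub (md3 2) r * tau (md3 0) r.
    rewrite C1 B3 -mulrA divfK // !mulf_neq0 // ?expf_neq0 ?mulf_neq0 ?invr_eq0 //.
  rewrite A1 A2 A3 A4 in e1 e2.
  split.
  + apply: (mulIf (x := taub (md3 2) p * (Q * (Q^-1 * x1) ^+ 3))).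
      by rewrite !mulf_neq0 // ?expf_neq0 ?mulf_neq0 ?invr_eq0.
    rewrite mulrC e1 -EQ. field.
    by rewrite ?nx0 ?nx1 ?nx2 ?nt0 ?nt1 ?nt2 ?ntb0 ?ntb1 ?ntb2.
  + apply: (mulIf (x := tau (md3 2) p * (Q * (Q^-1 * x1) ^+ 3))).
      by rewrite !mulf_neq0 // ?expf_neq0 ?mulf_neq0 ?invr_eq0.
    rewrite mulrC e2 -EQ. field.
    by rewrite ?nx0 ?nx1 ?nx2 ?nt0 ?nt1 ?nt2 ?ntb0 ?ntb1 ?ntb2.
- case: p Hp => [[x0 x1] x2] Hp; set p := (x0,x1,x2) in Hp *.
  pose r := Tpar Q 2 p; pose m := Tpar Q 3 r.
  have Hr : admissible Q r by exact: admT.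
  have Hm : admissible Q m by exact: admT.
  have Em : Tpar Q 1 m = p by apply: Tcomp => //; right; left.
  move: (H p Hp 2 isT) => /= [A1 A2 A3 A4].
  move: (H r Hr 3 isT) => /= [_ _ B3 B4].
  move: (H m Hm 1 isT) => /= [C1 C2 _ _].
  rewrite /Tact -/r -/m Em ?md3_3 ?md3_4 in A1 A2 A3 A4 B3 B4 C1 C2 *.
  rewrite -?[md3 0]/(md3 0) -?[md3 1]/(md3 1) -?[md3 2]/(md3 2) -?[alp r 2]/(Q^-1 * x2) in A1 A2 A3 A4 B3 B4 C1 C2 *.
  have [nx0 nx1 nx2 EQ] : [/\ x0 != 0, x1 != 0, x2 != 0 & x0 * x1 * x2 = Q] := Hp.
  have [nt0 ntb0] := Hnz _ Hp (md3 0).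
  have [nt1 ntb1] := Hnz _ Hp (md3 1).
  have [nt2 ntb2] := Hnz _ Hp (md3 2).
  have [nX nXb] := Hnz _ Hr (md3 2).
  rewrite -?[alp _ 0]/x0 -?[alp _ 1]/x1 -?[alp _ 2]/x2 -?[alp _ 3]/x0 -?[alp _ 4]/x1 in A3 A4 *.
  have e1 : taub (md3 0) p * (Q * (Q^-1 * x2) ^+ 3) * tau (md3 2) r =
    Q ^+ 2 * (Q^-1 * x2) ^+ 6 * tau (md3 1) r * taub (md3 0) r +
     taub (md3 1) r * tau (md3 0) r.
    rewrite C2 B4 -mulrA divfK // !mulf_neq0 // ?expf_neq0 ?mulf_neq0 ?invr_eq0 //.
  have e2 : tau (md3 0) p * (Q * (Q^-1 * x2) ^+ 3) * taub (md3 2) r =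
    (Q^-1 * x2) ^+ 6 * tau (md3 0) r * taub (md3 1) r +
     Q ^+ 2 * taub (md3 0) r * tau (md3 1) r.
    rewrite C1 B3 -mulrA divfK // !mulf_neq0 // ?expf_neq0 ?mulf_neq0 ?invr_eq0 //.
  rewrite A1 A2 A3 A4 in e1 e2.
  split.
  + apply: (mulIf (x := taub (md3 0) p * (Q * (Q^-1 * x2) ^+ 3))).
      by rewrite !mulf_neq0 // ?expf_neq0 ?mulf_neq0 ?invr_eq0.
    rewrite mulrC e1 -EQ. field.
    by rewrite ?nx0 ?nx1 ?nx2 ?nt0 ?nt1 ?nt2 ?ntb0 ?ntb1 ?ntb2.
  + apply: (mulIf (x := tau (md3 0) p * (Q * (Q^-1 * x2) ^+ 3))).
      by rewrite !mulf_neq0 // ?expf_neq0 ?mulf_neq0 ?invr_eq0.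
    rewrite mulrC e2 -EQ. field.
    by rewrite ?nx0 ?nx1 ?nx2 ?nt0 ?nt1 ?nt2 ?ntb0 ?ntb1 ?ntb2.
- case: p Hp => [[x0 x1] x2] Hp; set p := (x0,x1,x2) in Hp *.
  pose r := Tpar Q 3 p; pose m := Tpar Q 1 r.
  have Hr : admissible Q r by exact: admT.
  have Hm : admissible Q m by exact: admT.
  have Em : Tpar Q 2 m = p by apply: Tcomp => //; right; right.
  move: (H p Hp 3 isT) => /= [A1 A2 A3 A4].
  move: (H r Hr 1 isT) => /= [_ _ B3 B4].
  move: (H m Hm 2 isT) => /= [C1 C2 _ _].
  rewrite /Tact -/r -/m Em ?md3_3 ?md3_4 in A1 A2 A3 A4 B3 B4 C1 C2 *.
  rewrite -?[md3 0]/(md3 0) -?[md3 1]/(md3 1) -?[md3 2]/(md3 2) -?[alp r 0]/(Q^-1 * x0) in A1 A2 A3 A4 B3 B4 C1 C2 *.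
  have [nx0 nx1 nx2 EQ] : [/\ x0 != 0, x1 != 0, x2 != 0 & x0 * x1 * x2 = Q] := Hp.
  have [nt0 ntb0] := Hnz _ Hp (md3 0).
  have [nt1 ntb1] := Hnz _ Hp (md3 1).
  have [nt2 ntb2] := Hnz _ Hp (md3 2).
  have [nX nXb] := Hnz _ Hr (md3 0).
  rewrite -?[alp _ 0]/x0 -?[alp _ 1]/x1 -?[alp _ 2]/x2 -?[alp _ 3]/x0 -?[alp _ 4]/x1 in A3 A4 *.
  have e1 : taub (md3 1) p * (Q * (Q^-1 * x0) ^+ 3) * tau (md3 0) r =
    Q ^+ 2 * (Q^-1 * x0) ^+ 6 * tau (md3 2) r * taub (md3 1) r +
     taub (md3 2) r * tau (md3 1) r.
    rewrite C2 B4 -mulrA divfK // !mulf_neq0 // ?expf_neq0 ?mulf_neq0 ?invr_eq0 //.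
  have e2 : tau (md3 1) p * (Q * (Q^-1 * x0) ^+ 3) * taub (md3 0) r =
    (Q^-1 * x0) ^+ 6 * tau (md3 1) r * taub (md3 2) r +
     Q ^+ 2 * taub (md3 1) r * tau (md3 2) r.
    rewrite C1 B3 -mulrA divfK // !mulf_neq0 // ?expf_neq0 ?mulf_neq0 ?invr_eq0 //.
  rewrite A1 A2 A3 A4 in e1 e2.
  split.
  + apply: (mulIf (x := taub (md3 1) p * (Q * (Q^-1 * x0) ^+ 3))).
      by rewrite !mulf_neq0 // ?expf_neq0 ?mulf_neq0 ?invr_eq0.
    rewrite mulrC e1 -EQ. field.
    by rewrite ?nx0 ?nx1 ?nx2 ?nt0 ?nt1 ?nt2 ?ntb0 ?ntb1 ?ntb2.
  + apply: (mulIf (x := tau (md3 1) p * (Q * (Q^-1 * x0) ^+ 3))).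
      by rewrite !mulf_neq0 // ?expf_neq0 ?mulf_neq0 ?invr_eq0.
    rewrite mulrC e2 -EQ. field.
    by rewrite ?nx0 ?nx1 ?nx2 ?nt0 ?nt1 ?nt2 ?ntb0 ?ntb1 ?ntb2.
Qed.
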